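(* Let $n\geq1$ and let $c=(c^S,c^D)$ with $c^D\geq 0$ satisfy $\left(c^S-q_0\right)^++\sqrt{2L^2c^D}<\underline{q}-q_0$. Let $\Gamma_0\subseteq\mathcal{P}^n$ be the fixed-window IPT acceptance region for $\mathbf{H}_0$ with parameters $c$. Then $$\sup_{f_1\in\mathcal{P}_1}P_{f_1,1}\left(\hat f_{X_1^n}\in\Gamma_0\right)\leq (n+1)^m\exp\left(-n\left(\frac{\underline{q}-q_0-\left(c^S-q_0\right)^+}{\sqrt2 L}-\sqrt{c^D}\right)^2\right).$$
   Context: Setup. Let $\mathcal{A}=\{a_1,\dots,a_m\}$ be a finite alphabet and $\mathcal{P}$ the set of probability mass functions (p.m.f.s) on $\mathcal{A}$, with the $\ell_1$ norm $\|f-f'\|_1=\sum_a|f(a)-f'(a)|$. $I(f\|f')=\sum_{a}f(a)\log\frac{f(a)}{f'(a)}$ is the Kullback–Leibler divergence (natural logarithm, $0\log 0=0$). A known pre-change p.m.f. $f_0\in\mathcal{P}$ is fixed. $q:\mathcal{P}\to\mathbb{R}$ is quasiconcave and $L$-Lipschitz with respect to $\ell_1$ (i.e. $|q(f)-q(f')|\leq L\|f-f'\|_1$), with $q_0:=q(f_0)<0<\underline{q}$, and the set of possible post-change p.m.f.s $\mathcal{P}_1$ is a nonempty subset of $\{f: q(f)\geq\underline{q}\}$. Observations $X_1,X_2,\dots$ take values in $\mathcal{A}$; under $P_{f_1,t_1}$ ($f_1\in\mathcal{P}_1$, $t_1\geq 1$) the variables $X_1,\dots,X_{t_1-1}$ are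 i.i.d. $f_0$ and $X_{t_1},X_{t_1+1},\dots$ are i.i.d. $f_1$, independent of the former; $P_\infty$ denotes the law under which all $X_k$ are i.i.d. $f_0$. For $i\leq j$, $\hat f_{X_i^j}(a)=\frac{1}{j-i+1}\#\{i\leq k\leq j: X_k=a\}$ is the empirical p.m.f., and $\mathcal{P}^n$ is the (finite) set of p.m.f.s realizable as empirical p.m.f.s of $n$ letters of $\mathcal{A}$. $(x)^+=\max\{x,0\}$. Fixed-window IPT. Given $c=(c^S,c^D)$ with $c^D\geq0$ and $c^S<\sup_f q(f)$, let $f^*=\arg\min_{f\in\mathcal{P}:\,q(f)\geq c^S}I(f\|f_0)$ be the I-projection of $f_0$ onto the closed convex set $\{q\geq c^S\}$. For sample size $n$, set $\Gamma_1=\{f\in\mathcal{P}^n: q(f)\geq c^S\text{ and } I(f\|f^* )\geq c^D\}$ and $\Gamma_0=\mathcal{P}^n\setminus\Gamma_1$; the test declares $\mathbf{H}_1$ (change/alternative) iff $\hat f_{X_1^n}\in\Gamma_1$. *)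

(* Defs.v *)
From Stdlib Require Import Reals Lra List Arith ClassicalEpsilon.
Import ListNotations.
Open Scope R_scope.

(* The alphabet A = {a_1..a_m} is encoded as the naturals 0..m-1.
   A p.m.f. is a function nat -> R; only its values on 0..m-1 matter. *)

Definition sumA (m : nat) (F : nat -> R) : R :=
  fold_right Rplus 0 (map F (seq 0 m)).

Definition is_pmf (m : nat) (f : nat -> R) : Prop :=
  (forall a, (a < m)%nat -> 0 <= f a) /\ sumA m f = 1.

Definition l1 (m : nat) (f g : nat -> R) : R := sumA m (fun a => Rabs (f a - g a)).

Definition abs_cont (m : nat) (f g : nat -> R) : Prop :=
  forall a, (a < m)%nat -> g a = 0 -> f a = 0.

(* finite value of I(f||g) (meaningful when abs_cont m f g), 0 log 0 = 0 *)
Definition KLsum (m : nat) (f g : nat -> R) : R :=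
  sumA m (fun a => if Rlt_dec 0 (f a) then f a * ln (f a / g a) else 0).

(* "I(f||g) >= c" in the extended sense: I = +infinity if f is not
   absolutely continuous w.r.t. g *)
Definition KL_ge (m : nat) (f g : nat -> R) (c : R) : Prop :=
  ~ abs_cont m f g \/ c <= KLsum m f g.

Definition mix (lam : R) (f g : nat -> R) : nat -> R :=
  fun a => lam * f a + (1 - lam) * g a.

Definition quasiconcave (m : nat) (q : (nat -> R) -> R) : Prop :=
  forall f g lam, is_pmf m f -> is_pmf m g -> 0 <= lam <= 1 ->
    Rmin (q f) (q g) <= q (mix lam f g).

Definition lipschitz_l1 (m : nat) (q : (nat -> R) -> R) (L : R) : Prop :=
  forall f g, is_pmf m f -> is_pmf m g -> Rabs (q f - q g) <= L * l1 m f g.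

Definition I_projection (m : nat) (q : (nat -> R) -> R) (cS : R)
    (f0 fstar : nat -> R) : Prop :=
  is_pmf m fstar /\ cS <= q fstar /\ abs_cont m fstar f0 /\
  forall f, is_pmf m f -> cS <= q f -> abs_cont m f f0 ->
    KLsum m fstar f0 <= KLsum m f f0.

Fixpoint words (m n : nat) : list (list nat) :=
  match n with
  | O => [ [] ]
  | S k => flat_map (fun w => map (fun a => a :: w) (seq 0 m)) (words m k)
  end.

Definition word_prob (f : nat -> R) (w : list nat) : R :=
  fold_right Rmult 1 (map f w).

Definition emp (w : list nat) : nat -> R :=
  fun a => INR (count_occ Nat.eq_dec w a) / INR (length w).

Definition ind (P : Prop) : R :=
  if excluded_middle_informative P then 1 else 0.

(* P(empirical pmf of X_1..X_n satisfies E) when X_1,X_2,... i.i.d. f *)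
Definition prob_emp (m n : nat) (f : nat -> R) (E : (nat -> R) -> Prop) : R :=
  fold_right Rplus 0 (map (fun w => word_prob f w * ind (E (emp w))) (words m n)).

Definition Gamma1 (m : nat) (q : (nat -> R) -> R) (cS cD : R) (fstar : nat -> R)
  (h : nat -> R) : Prop := cS <= q h /\ KL_ge m h fstar cD.

Definition Gamma0 (m : nat) (q : (nat -> R) -> R) (cS cD : R) (fstar : nat -> R)
  (h : nat -> R) : Prop := ~ Gamma1 m q cS cD fstar h.

(* Main.v *)
From Pilot Require Import Defs.
From Stdlib Require Import Reals Lra Lia List Classical ClassicalEpsilon.
From Coquelicot Require Import Coquelicot.
Open Scope R_scope.
Lemma chi_der c : 0 < c -> derivable_pt_lim (fun t => (t+1)*ln t - 2*(t-1)) c (ln c + / c - 1).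
Proof. intros Hc. apply is_derive_Reals. auto_derive. lra. field. lra. Qed.
Lemma psi_der c : 0 < c -> derivable_pt_lim (fun t => (2*t+4)*(t*ln t - t + 1) - 3*(t-1)^2) c (4*((c+1)*ln c - 2*(c-1))).
Proof. intros Hc. apply is_derive_Reals. auto_derive. lra. field. lra. Qed.

Lemma ln_le y : 0 < y -> ln y <= y - 1.
Proof. intros Hy. pose proof (exp_ineq1_le (ln y)). rewrite exp_ln in H; lra. Qed.

Lemma ln_ge y : 0 < y -> 1 - / y <= ln y.
Proof. intros Hy. pose proof (ln_le (/ y) (Rinv_0_lt_compat _ Hy)).
  rewrite ln_Rinv in H by lra. lra. Qed.

Lemma chi_sign t : 0 < t -> 0 <= (t - 1) * ((t+1)*ln t - 2*(t-1)).
Proof.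
  intros Ht. destruct (Rtotal_order t 1) as [H|[H|H]].
  - destruct (MVT_cor2 (fun t => (t+1)*ln t - 2*(t-1)) (fun c => ln c + / c - 1) t 1 H)
      as [c [Hc1 Hc2]].
    { intros c Hc. apply chi_der. lra. }
    cbv beta in Hc1; rewrite ln_1 in Hc1.
    assert (0 <= ln c + / c - 1) by (pose proof (ln_ge c); lra).
    assert ((t+1)*ln t - 2*(t-1) = - ((ln c + / c - 1) * (1 - t))) by lra.
    rewrite H1. replace ((t - 1) * - ((ln c + / c - 1) * (1 - t))) with ((ln c + / c - 1) * ((1-t)*(1-t))) by ring. apply Rmult_le_pos; nra.
  - subst. lra.
  - destruct (MVT_cor2 (fun t => (t+1)*ln t - 2*(t-1)) (fun c => ln c + / c - 1) 1 t H)
      as [c [Hc1 Hc2]].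
    { intros c Hc. apply chi_der. lra. }
    cbv beta in Hc1; rewrite ln_1 in Hc1.
    assert (0 <= ln c + / c - 1) by (pose proof (ln_ge c); lra).
    assert ((t+1)*ln t - 2*(t-1) = ((ln c + / c - 1) * (t - 1))) by lra.
    rewrite H1. replace ((t - 1) * ((ln c + / c - 1) * (t - 1))) with ((ln c + / c - 1) * ((t-1)*(t-1))) by ring. apply Rmult_le_pos; nra.
Qed.

Lemma psi_pos t : 0 < t -> 3*(t-1)^2 <= (2*t+4)*(t*ln t - t + 1).
Proof.
  intros Ht. destruct (Rtotal_order t 1) as [H|[H|H]].
  - destruct (MVT_cor2 (fun t => (2*t+4)*(t*ln t - t + 1) - 3*(t-1)^2)
      (fun c => 4*((c+1)*ln c - 2*(c-1))) t 1 H) as [c [Hc1 Hc2]].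
    { intros c Hc. apply psi_der. lra. }
    cbv beta in Hc1; rewrite ln_1 in Hc1. pose proof (chi_sign c ltac:(lra)).
    assert (X: (c+1)*ln c - 2*(c-1) <= 0).
    { destruct (Rle_dec ((c+1)*ln c - 2*(c-1)) 0); [auto|].
      assert (0 < (1-c) * ((c+1)*ln c - 2*(c-1))) by (apply Rmult_lt_0_compat; lra). lra. }
    assert (0 <= (- ((c+1)*ln c - 2*(c-1))) * (1 - t)) by (apply Rmult_le_pos; lra).
    lra.
  - subst. rewrite ln_1. lra.
  - destruct (MVT_cor2 (fun t => (2*t+4)*(t*ln t - t + 1) - 3*(t-1)^2)
      (fun c => 4*((c+1)*ln c - 2*(c-1))) 1 t H) as [c [Hc1 Hc2]].
    { intros c Hc. apply psi_der. lra. }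
    cbv beta in Hc1; rewrite ln_1 in Hc1. pose proof (chi_sign c ltac:(lra)).
    assert (X: 0 <= (c+1)*ln c - 2*(c-1)).
    { destruct (Rle_dec 0 ((c+1)*ln c - 2*(c-1))); [auto|].
      assert (0 < (c-1) * (-((c+1)*ln c - 2*(c-1)))) by (apply Rmult_lt_0_compat; lra). lra. }
    assert (0 <= (((c+1)*ln c - 2*(c-1))) * (t - 1)) by (apply Rmult_le_pos; lra).
    lra.
Qed.

Lemma coord (x y : R) : 0 <= x -> 0 <= y -> (y = 0 -> x = 0) ->
  0 <= (if Rlt_dec 0 x then x * ln (x / y) else 0) - x + y /\
  (x - y)^2 <= (2*x/3 + 4*y/3) * ((if Rlt_dec 0 x then x * ln (x / y) else 0) - x + y).
Proof.
  intros Hx Hy Hxy. destruct (Rlt_dec 0 x) as [Hx0|Hx0].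
  - assert (Hy0 : 0 < y). { destruct Hy as [Hy|Hy]; auto. subst. specialize (Hxy eq_refl). lra. }
    set (t := x / y). assert (Ht : 0 < t) by (unfold t; apply Rdiv_lt_0_compat; auto).
    assert (Hxt : x = t * y) by (unfold t; field; lra). rewrite Hxt.
    pose proof (psi_pos t Ht). pose proof (ln_ge t Ht).
    assert (E1 : t * ln t - t + 1 >= 0).
    { assert (t * ln t >= t * (1 - / t)) by (apply Rle_ge, Rmult_le_compat_l; lra).
      replace (t * (1 - / t)) with (t - 1) in H1 by (field; lra). lra. }
    split.
    + replace (t * y * ln t - t * y + y) with (y * (t * ln t - t + 1)) by ring.
      apply Rmult_le_pos; lra.
    + replace ((2 * (t * y) / 3 + 4 * y / 3) * (t * y * ln t - t * y + y))
        with (y^2 * ((2*t+4)*(t*ln t - t + 1)) / 3) by field.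
      replace ((t * y - y) ^ 2) with (y^2 * (3 * (t-1)^2)/3) by field.
      apply Rmult_le_compat_r; [lra|]. apply Rmult_le_compat_l; [nra|lra].
  - assert (x = 0) by lra. subst. split; [lra|]. nra.
Qed.

Lemma abs_le_amgm (x w D s : R) : 0 <= w -> 0 <= D -> 0 < s -> x^2 <= w * D ->
  Rabs x <= s * w / 2 + D / (2 * s).
Proof.
  intros Hw HD Hs Hx.
  assert (HD2 : 0 <= D / (2*s)) by (apply Rdiv_le_0_compat; lra).
  assert (Hy2 : (s * w / 2 + D / (2 * s))^2 - w*D = (s * w / 2 - D / (2 * s))^2).
  { field. lra. }
  assert (Hy : 0 <= s * w / 2 + D / (2 * s)) by nra.
  assert (Hsq : x^2 <= (s * w / 2 + D / (2 * s))^2).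
  { pose proof (pow2_ge_0 (s * w / 2 - D / (2 * s))). lra. }
  revert Hsq Hy. generalize (s * w / 2 + D / (2 * s)). intros y Hsq Hy.
  destruct (Rcase_abs x) as [Hn|Hn]; [rewrite Rabs_left by auto|rewrite Rabs_right by auto]; nra.
Qed.

Definition lsum {A : Type} (l : list A) (F : A -> R) : R := fold_right Rplus 0 (map F l).
Definition lprod {A : Type} (l : list A) (F : A -> R) : R := fold_right Rmult 1 (map F l).

Lemma lsum_cons {A} (x : A) l F : lsum (x :: l) F = F x + lsum l F.
Proof. reflexivity. Qed.
Lemma lsum_nil {A} (F : A -> R) : lsum nil F = 0.
Proof. reflexivity. Qed.
Lemma lprod_cons {A} (x : A) l F : lprod (x :: l) F = F x * lprod l F.
Proof. reflexivity. Qed.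

Lemma lsum_ext {A} (l : list A) F G : (forall x, In x l -> F x = G x) -> lsum l F = lsum l G.
Proof. induction l; intros H; [reflexivity|]. rewrite !lsum_cons. rewrite H by (left; auto).
  rewrite IHl; auto. intros; apply H; right; auto. Qed.
Lemma lprod_ext {A} (l : list A) F G : (forall x, In x l -> F x = G x) -> lprod l F = lprod l G.
Proof. induction l; intros H; [reflexivity|]. rewrite !lprod_cons. rewrite H by (left; auto).
  rewrite IHl; auto. intros; apply H; right; auto. Qed.
Lemma lsum_le {A} (l : list A) F G : (forall x, In x l -> F x <= G x) -> lsum l F <= lsum l G.
Proof. induction l; intros H; [unfold lsum, lprod; simpl; lra|]. rewrite !lsum_cons.
  pose proof (H a (or_introl eq_refl)). assert (lsum l F <= lsum l G) by (apply IHl; intros; apply H; right; auto). lra. Qed.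
Lemma lsum_plus {A} (l : list A) F G : lsum l (fun x => F x + G x) = lsum l F + lsum l G.
Proof. induction l; [unfold lsum, lprod; simpl; lra|]. rewrite !lsum_cons, IHl. lra. Qed.
Lemma lsum_scal {A} (l : list A) c F : lsum l (fun x => c * F x) = c * lsum l F.
Proof. induction l; [unfold lsum, lprod; simpl; lra|]. rewrite !lsum_cons, IHl. lra. Qed.
Lemma lsum_opp {A} (l : list A) F : lsum l (fun x => - F x) = - lsum l F.
Proof. induction l; [unfold lsum, lprod; simpl; lra|]. rewrite !lsum_cons, IHl. lra. Qed.
Lemma lsum_nonneg {A} (l : list A) F : (forall x, In x l -> 0 <= F x) -> 0 <= lsum l F.
Proof. intros H. replace 0 with (lsum l (fun _ => 0)). apply lsum_le; auto.
  induction l; auto. rewrite lsum_cons, IHl; [lra|]. intros; apply H; right; auto. Qed.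
Lemma lsum_ge_elem {A} (l : list A) F x : In x l -> (forall y, In y l -> 0 <= F y) -> F x <= lsum l F.
Proof. induction l; intros Hx H; [destruct Hx|]. rewrite lsum_cons. destruct Hx as [<-|Hx].
  - assert (0 <= lsum l F) by (apply lsum_nonneg; intros; apply H; right; auto). lra.
  - pose proof (H a (or_introl eq_refl)). assert (F x <= lsum l F) by (apply IHl; auto; intros; apply H; right; auto). lra. Qed.
Lemma lsum_app {A} (l1 l2 : list A) F : lsum (l1 ++ l2) F = lsum l1 F + lsum l2 F.
Proof. induction l1; simpl app; [rewrite lsum_nil; lra|]. rewrite !lsum_cons, IHl1. lra. Qed.
Lemma lsum_map {A B} (l : list A) (g : A -> B) F : lsum (map g l) F = lsum l (fun x => F (g x)).
Proof. induction l; [reflexivity|]. simpl map. rewrite !lsum_cons, IHl. reflexivity. Qed.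
Lemma lsum_flat_map {A B} (l : list A) (g : A -> list B) F :
  lsum (flat_map g l) F = lsum l (fun x => lsum (g x) F).
Proof. induction l; [reflexivity|]. simpl flat_map. rewrite lsum_app, lsum_cons, IHl. reflexivity. Qed.
Lemma lsum_exchange {A B} (l1 : list A) (l2 : list B) F :
  lsum l1 (fun x => lsum l2 (F x)) = lsum l2 (fun y => lsum l1 (fun x => F x y)).
Proof. induction l1.
  - rewrite lsum_nil. symmetry. replace 0 with (lsum l2 (fun _ => 0)).
    apply lsum_ext; intros; reflexivity. clear. induction l2; auto. rewrite lsum_cons, IHl2; lra.
  - rewrite lsum_cons, IHl1, <- lsum_plus. apply lsum_ext. intros; rewrite lsum_cons; reflexivity. Qed.
Lemma lsum_const1 {A} (l : list A) : lsum l (fun _ => 1) = INR (length l).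
Proof. induction l; [reflexivity|]. rewrite lsum_cons, IHl. simpl length. rewrite S_INR. lra. Qed.
Lemma lprod_mult {A} (l : list A) F G : lprod l (fun x => F x * G x) = lprod l F * lprod l G.
Proof. induction l; [unfold lsum, lprod; simpl; lra|]. rewrite !lprod_cons, IHl. ring. Qed.
Lemma exp_lsum {A} (l : list A) F : exp (lsum l F) = lprod l (fun x => exp (F x)).
Proof. induction l; [unfold lsum, lprod; simpl; apply exp_0|]. rewrite lsum_cons, lprod_cons, exp_plus, IHl. reflexivity. Qed.
Lemma lprod_zero {A} (l : list A) F x : In x l -> F x = 0 -> lprod l F = 0.
Proof. induction l; intros Hx H; [destruct Hx|]. rewrite lprod_cons. destruct Hx as [<-|Hx].
  - rewrite H; ring. - rewrite IHl; auto; ring. Qed.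
Lemma lprod_nonneg {A} (l : list A) F : (forall x, In x l -> 0 <= F x) -> 0 <= lprod l F.
Proof. induction l; intros H; [unfold lsum, lprod; simpl; lra|]. rewrite lprod_cons. apply Rmult_le_pos.
  apply H; left; auto. apply IHl; intros; apply H; right; auto. Qed.

Lemma sumA_lsum m F : sumA m F = lsum (seq 0 m) F.
Proof. reflexivity. Qed.

Lemma pinsker m h g : is_pmf m h -> is_pmf m g -> abs_cont m h g ->
  (l1 m h g)^2 <= 2 * KLsum m h g.
Proof.
  intros [Hh0 Hh1] [Hg0 Hg1] Hac.
  set (K := fun a => if Rlt_dec 0 (h a) then h a * ln (h a / g a) else 0).
  set (D := fun a => K a - h a + g a).
  set (w := fun a => 2 * h a / 3 + 4 * g a / 3).
  assert (Hc : forall a, In a (seq 0 m) -> 0 <= D a /\ 0 <= w a /\ (h a - g a)^2 <= w a * D a).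
  { intros a Ha. apply in_seq in Ha. destruct Ha as [_ Ha]. simpl in Ha.
    pose proof (Hh0 a Ha). pose proof (Hg0 a Ha).
    destruct (coord (h a) (g a)) as [C1 C2]; auto.
    unfold D, K, w. repeat split; auto. lra. }
  assert (HKL : KLsum m h g = lsum (seq 0 m) D).
  { unfold D. rewrite lsum_plus. unfold Rminus. rewrite lsum_plus, lsum_opp.
    unfold KLsum in *. rewrite sumA_lsum in *. unfold K. lra. }
  assert (HW : lsum (seq 0 m) w = 2).
  { unfold w. rewrite lsum_plus. unfold Rdiv.
    rewrite (lsum_ext _ (fun x => 2 * h x * / 3) (fun x => (2 * /3) * h x)) by (intros; ring).
    rewrite (lsum_ext _ (fun x => 4 * g x * / 3) (fun x => (4 * /3) * g x)) by (intros; ring).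
    rewrite !lsum_scal. rewrite sumA_lsum in *. rewrite Hh1, Hg1. field. }
  assert (HKL0 : 0 <= KLsum m h g) by (rewrite HKL; apply lsum_nonneg; intros; apply Hc; auto).
  assert (Hl10 : 0 <= l1 m h g) by (unfold l1; rewrite sumA_lsum; apply lsum_nonneg; intros; apply Rabs_pos).
  assert (Hs : forall s, 0 < s -> l1 m h g <= s + KLsum m h g / (2 * s)).
  { intros s Hs. unfold l1. rewrite sumA_lsum.
    apply Rle_trans with (lsum (seq 0 m) (fun a => (s/2) * w a + / (2*s) * D a)).
    - apply lsum_le. intros a Ha. destruct (Hc a Ha) as [C1 [C2 C3]].
      pose proof (abs_le_amgm (h a - g a) (w a) (D a) s C2 C1 Hs C3). 
      replace ((s/2) * w a + / (2*s) * D a) with (s * w a / 2 + D a / (2 * s)) by (field; lra). auto.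
    - rewrite lsum_plus, !lsum_scal, HW, HKL. right. field. lra. }
  destruct Hl10 as [Hp|Hz].
  - specialize (Hs (l1 m h g / 2) ltac:(lra)).
    assert (l1 m h g * l1 m h g <= l1 m h g * (l1 m h g / 2 + KLsum m h g / (2 * (l1 m h g / 2)))).
    { apply Rmult_le_compat_l; lra. }
    replace (l1 m h g * (l1 m h g / 2 + KLsum m h g / (2 * (l1 m h g / 2)))) with
      (l1 m h g * l1 m h g / 2 + KLsum m h g) in H by (field; lra).
    simpl. lra.
  - rewrite <- Hz. simpl. lra.
Qed.

Lemma wp_cons f x w : word_prob f (x :: w) = f x * word_prob f w.
Proof. reflexivity. Qed.

Lemma wp_ext f g w : (forall x, In x w -> f x = g x) -> word_prob f w = word_prob g w.
Proof. induction w; intros H; [reflexivity|]. rewrite !wp_cons, H by (left; auto).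
  rewrite IHw; auto. intros; apply H; right; auto. Qed.

Lemma wp_nonneg f w : (forall x, In x w -> 0 <= f x) -> 0 <= word_prob f w.
Proof. induction w; intros H; [unfold word_prob; simpl; lra|]. rewrite wp_cons. apply Rmult_le_pos.
  apply H; left; auto. apply IHw; intros; apply H; right; auto. Qed.

Lemma words_in m n w : In w (words m n) <-> length w = n /\ (forall x, In x w -> (x < m)%nat).
Proof.
  revert w. induction n; intros w; simpl words.
  - split. + intros [<-|[]]. split; auto. intros x []. 
    + intros [H _]. destruct w; [left; auto|discriminate].
  - rewrite in_flat_map. split.
    + intros [w' [Hw' Hin]]. apply in_map_iff in Hin. destruct Hin as [a [<- Ha]].
      apply IHn in Hw'. destruct Hw' as [Hl Hx]. apply in_seq in Ha.
      split; [simpl; auto|]. intros x [<-|Hx']; [lia|auto].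
    + intros [Hl Hx]. destruct w as [|a w']; [discriminate|]. exists w'. split.
      * apply IHn. split; [simpl in Hl; lia|]. intros; apply Hx; right; auto.
      * apply in_map_iff. exists a. split; auto. apply in_seq. split; [lia|]. simpl. apply Hx; left; auto.
Qed.

Lemma wp_sum m n h : lsum (words m n) (word_prob h) = (sumA m h)^n.
Proof.
  induction n; simpl words.
  - unfold lsum, word_prob; simpl. lra.
  - rewrite lsum_flat_map. rewrite (lsum_ext _ _ (fun w => sumA m h * word_prob h w)).
    + rewrite lsum_scal, IHn. simpl. ring.
    + intros w _. rewrite lsum_map. rewrite (lsum_ext _ _ (fun a => word_prob h w * h a)).
      * rewrite lsum_scal. rewrite sumA_lsum. ring.
      * intros; rewrite wp_cons; ring.
Qed.

Lemma words_card M k : lsum (words M k) (fun _ => 1) = INR M ^ k.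
Proof.
  rewrite (lsum_ext _ _ (word_prob (fun _ => 1))).
  - rewrite wp_sum. f_equal. rewrite sumA_lsum, lsum_const1, length_seq. reflexivity.
  - intros w _. clear. induction w; [reflexivity|]. rewrite wp_cons, <- IHw. ring.
Qed.

Lemma lprod_upd (l : list nat) x c F : NoDup l -> In x l ->
  lprod l (fun a => if Nat.eq_dec a x then c * F a else F a) = c * lprod l F.
Proof.
  induction l as [|y l IH]; intros Hnd Hx; [destruct Hx|]. inversion Hnd; subst.
  rewrite !lprod_cons. destruct (Nat.eq_dec y x) as [->|Hne].
  - rewrite (lprod_ext _ _ F). ring. intros a Ha. destruct (Nat.eq_dec a x); auto. subst; contradiction.
  - destruct Hx as [->|Hx]; [contradiction|]. rewrite IH; auto. ring.
Qed.

Lemma lsum_ind (l : list nat) x : NoDup l -> In x l ->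
  lsum l (fun a => if Nat.eq_dec a x then 1 else 0) = 1.
Proof.
  induction l as [|y l IH]; intros Hnd Hx; [destruct Hx|]. inversion Hnd; subst.
  rewrite !lsum_cons. destruct (Nat.eq_dec y x) as [->|Hne].
  - rewrite (lsum_ext _ _ (fun _ => 0)). replace (lsum l (fun _ : nat => 0)) with 0. ring.
    { clear. induction l; auto. rewrite lsum_cons, <- IHl. ring. }
    intros a Ha. destruct (Nat.eq_dec a x); auto. subst; contradiction.
  - destruct Hx as [->|Hx]; [contradiction|]. rewrite IH; auto. ring.
Qed.

Lemma wp_prod m f w : (forall x, In x w -> (x < m)%nat) ->
  word_prob f w = lprod (seq 0 m) (fun a => f a ^ count_occ Nat.eq_dec w a).
Proof.
  induction w as [|x w IH]; intros H.
  - rewrite (lprod_ext _ _ (fun _ => 1)). { clear. induction (seq 0 m); auto. rewrite lprod_cons, <- IHl. simpl; ring. }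
    intros; simpl; reflexivity.
  - rewrite wp_cons, IH by (intros; apply H; right; auto).
    rewrite <- (lprod_upd (seq 0 m) x (f x)).
    + apply lprod_ext. intros a _. destruct (Nat.eq_dec a x) as [->|Hne].
      * rewrite count_occ_cons_eq by auto. simpl. ring.
      * rewrite count_occ_cons_neq by auto. reflexivity.
    + apply seq_NoDup.
    + apply in_seq. split; [lia|]. simpl. apply H; left; auto.
Qed.

Lemma count_sum m w : (forall x, In x w -> (x < m)%nat) ->
  lsum (seq 0 m) (fun a => INR (count_occ Nat.eq_dec w a)) = INR (length w).
Proof.
  induction w as [|x w IH]; intros H.
  - change (lsum (seq 0 m) (fun _ => 0) = 0). clear. induction (seq 0 m); auto. rewrite lsum_cons, IHl. ring.
  - rewrite (lsum_ext _ _ (fun a => (if Nat.eq_dec a x then 1 else 0) + INR (count_occ Nat.eq_dec w a))).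
    + rewrite lsum_plus, lsum_ind, IH.
      * simpl length. rewrite S_INR. ring.
      * intros; apply H; right; auto.
      * apply seq_NoDup.
      * apply in_seq. split; [lia|]. simpl. apply H; left; auto.
    + intros a _. destruct (Nat.eq_dec a x) as [->|Hne].
      * rewrite count_occ_cons_eq by auto. rewrite S_INR. ring.
      * rewrite count_occ_cons_neq by auto. ring.
Qed.

Lemma emp_pmf m n w : (1 <= n)%nat -> In w (words m n) -> is_pmf m (emp w).
Proof.
  intros Hn Hw. apply words_in in Hw. destruct Hw as [Hl Hx]. split.
  - intros a _. unfold emp. apply Rdiv_le_0_compat. apply pos_INR. apply lt_0_INR. lia.
  - unfold sumA. fold (lsum (seq 0 m) (emp w)). unfold emp. unfold Rdiv.
    rewrite (lsum_ext _ _ (fun a => / INR (length w) * INR (count_occ Nat.eq_dec w a))) by (intros; ring).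
    rewrite lsum_scal, count_sum by auto. field. apply not_0_INR. lia.
Qed.

Lemma exp_INR_ln c y : 0 < y -> exp (INR c * ln y) = y ^ c.
Proof. intros Hy. rewrite <- Rpower_pow by auto. reflexivity. Qed.

Lemma type_prob m n f w : (1 <= n)%nat -> In w (words m n) ->
  (forall a, (a < m)%nat -> 0 <= f a) -> abs_cont m (emp w) f ->
  word_prob f w = word_prob (emp w) w * exp (- INR n * KLsum m (emp w) f).
Proof.
  intros Hn Hw Hf Hac. pose proof Hw as Hw'. apply words_in in Hw'. destruct Hw' as [Hl Hx].
  assert (HnR : 0 < INR n) by (apply lt_0_INR; lia).
  rewrite !(wp_prod m) by auto.
  unfold KLsum. rewrite sumA_lsum.
  rewrite <- lsum_scal, exp_lsum, <- lprod_mult.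
  apply lprod_ext. intros a Ha. apply in_seq in Ha. destruct Ha as [_ Ha]. simpl in Ha.
  set (c := count_occ Nat.eq_dec w a).
  assert (Hc : INR c = INR n * emp w a).
  { unfold emp, c. rewrite Hl. field. lra. }
  destruct (Rlt_dec 0 (emp w a)) as [Hp|Hp].
  - assert (Hfa : 0 < f a).
    { destruct (Hf a Ha) as [H|H]; auto. symmetry in H. apply Hac in H; auto. lra. }
    replace (- INR n * (emp w a * ln (emp w a / f a))) with (INR c * ln (f a / emp w a)).
    + rewrite exp_INR_ln by (apply Rdiv_lt_0_compat; auto).
      rewrite <- Rpow_mult_distr. f_equal. field. lra.
    + rewrite Hc. replace (emp w a / f a) with (/ (f a / emp w a)) by (field; lra).
      rewrite ln_Rinv by (apply Rdiv_lt_0_compat; auto). ring.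
  - assert (He : emp w a = 0).
    { assert (0 <= emp w a) by (unfold emp; rewrite Hl; apply Rdiv_le_0_compat; [apply pos_INR|lra]). lra. }
    rewrite He, Rmult_0_r in Hc. change 0 with (INR 0) in Hc. apply INR_eq in Hc.
    rewrite Hc. simpl. rewrite Rmult_0_r, exp_0. ring.
Qed.

Lemma type_prob0 m n f w : (1 <= n)%nat -> In w (words m n) ->
  ~ abs_cont m (emp w) f -> word_prob f w = 0.
Proof.
  intros Hn Hw Hac. pose proof Hw as Hw'. apply words_in in Hw'. destruct Hw' as [Hl Hx].
  assert (exists a, (a < m)%nat /\ f a = 0 /\ emp w a <> 0).
  { apply NNPP. intros Hne. apply Hac. intros a Ha Hfa. apply NNPP. intros He.
    apply Hne. exists a. auto. }
  destruct H as [a [Ha [Hfa He]]].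
  rewrite (wp_prod m) by auto. apply (lprod_zero _ _ a).
  - apply in_seq. split; [lia|]. simpl; auto.
  - rewrite Hfa. apply pow_i. destruct (count_occ Nat.eq_dec w a) eqn:E; [|lia].
    exfalso. apply He. unfold emp. rewrite E. simpl. unfold Rdiv. ring.
Qed.

Lemma types_bound m n : (1 <= n)%nat ->
  lsum (words m n) (fun w => word_prob (emp w) w) <= (INR n + 1)^m.
Proof.
  intros Hn. assert (HnR : 0 < INR n) by (apply lt_0_INR; lia).
  set (T := words (S n) m).
  set (H := fun (kv : list nat) (a : nat) => INR (nth a kv 0%nat) / INR n).
  set (G := fun kv w => word_prob (H kv) w * Pilot.Defs.ind (sumA m (H kv) = 1)).
  assert (Hind : forall P : Prop, 0 <= Pilot.Defs.ind P <= 1).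
  { intros P. unfold Pilot.Defs.ind. destruct (excluded_middle_informative P); lra. }
  assert (HG0 : forall kv w, 0 <= G kv w).
  { intros kv w. unfold G. apply Rmult_le_pos; [|apply Hind].
    apply wp_nonneg. intros; unfold H. apply Rdiv_le_0_compat; [apply pos_INR|lra]. }
  apply Rle_trans with (lsum (words m n) (fun w => lsum T (fun kv => G kv w))).
  - apply lsum_le. intros w Hw. pose proof Hw as Hw'. apply words_in in Hw'. destruct Hw' as [Hl Hx].
    set (kv0 := map (fun a => count_occ Nat.eq_dec w a) (seq 0 m)).
    assert (Hk : forall a, (a < m)%nat -> H kv0 a = emp w a).
    { intros a Ha. unfold H, kv0, emp. rewrite Hl. f_equal. f_equal.
      rewrite (nth_indep _ 0%nat ((fun a => count_occ Nat.eq_dec w a) 0%nat)) by (rewrite length_map, length_seq; auto).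
      rewrite map_nth, seq_nth by auto. reflexivity. }
    replace (word_prob (emp w) w) with (G kv0 w).
    + apply (lsum_ge_elem T (fun kv => G kv w) kv0); [|intros; apply HG0]. unfold T. apply words_in. split.
      * unfold kv0. rewrite length_map, length_seq. reflexivity.
      * intros x Hx'. unfold kv0 in Hx'. apply in_map_iff in Hx'. destruct Hx' as [a [<- _]].
        pose proof (count_occ_bound Nat.eq_dec a w). lia.
    + unfold G. rewrite (wp_ext (H kv0) (emp w)) by (intros; apply Hk; auto).
      assert (Hs : sumA m (H kv0) = 1).
      { rewrite sumA_lsum, (lsum_ext _ _ (emp w)). rewrite <- sumA_lsum. apply (emp_pmf m n); auto.
        intros a Ha. apply in_seq in Ha. apply Hk. lia. }
      unfold Pilot.Defs.ind. destruct (excluded_middle_informative _); [ring|contradiction].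
  - rewrite lsum_exchange.
    apply Rle_trans with (lsum T (fun _ => 1)).
    + apply lsum_le. intros kv _. unfold G.
      rewrite (lsum_ext _ _ (fun w => Pilot.Defs.ind (sumA m (H kv) = 1) * word_prob (H kv) w)) by (intros; ring).
      rewrite lsum_scal. change (lsum (words m n) (fun w => word_prob (H kv) w)) with (lsum (words m n) (word_prob (H kv))).
      rewrite wp_sum. unfold Pilot.Defs.ind. destruct (excluded_middle_informative _) as [E|E].
      * rewrite E, pow1. lra.
      * lra.
    + unfold T. rewrite words_card, S_INR. lra.
Qed.

Lemma l1_nonneg m f g : 0 <= l1 m f g.
Proof. unfold l1; rewrite sumA_lsum; apply lsum_nonneg; intros; apply Rabs_pos. Qed.

Lemma tangent (g z y : R) : 0 < g -> 0 < z -> 0 <= y ->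
  z * ln (z / g) + (1 + ln (z / g)) * (y - z) <= (if Rlt_dec 0 y then y * ln (y / g) else 0).
Proof.
  intros Hg Hz Hy. destruct (Rlt_dec 0 y) as [Hy0|Hy0].
  - replace (y / g) with ((y / z) * (z / g)) by (field; lra).
    rewrite ln_mult by (apply Rdiv_lt_0_compat; auto).
    pose proof (ln_ge (y / z) ltac:(apply Rdiv_lt_0_compat; auto)).
    assert (y * (1 - / (y / z)) <= y * ln (y / z)) by (apply Rmult_le_compat_l; lra).
    replace (y * (1 - / (y / z))) with (y - z) in H0 by (field; lra). nra.
  - assert (y = 0) by lra. subst. nra.
Qed.

Lemma KL_convex m x g lam : is_pmf m x -> is_pmf m g -> abs_cont m x g -> 0 <= lam < 1 ->
  KLsum m (mix lam x g) g <= lam * KLsum m x g.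
Proof.
  intros [Hx0 _] [Hg0 _] Hac Hl. unfold KLsum. rewrite !sumA_lsum, <- lsum_scal.
  apply lsum_le. intros a Ha. apply in_seq in Ha. destruct Ha as [_ Ha]. simpl in Ha.
  pose proof (Hx0 a Ha). pose proof (Hg0 a Ha). unfold mix.
  destruct (Req_dec (g a) 0) as [E|E].
  - pose proof (Hac a Ha E). rewrite E, H1.
    destruct (Rlt_dec 0 (lam * 0 + (1 - lam) * 0)); [lra|]. destruct (Rlt_dec 0 0); lra.
  - assert (Hg : 0 < g a) by lra. set (z := lam * x a + (1 - lam) * g a).
    assert (Hz : 0 < z) by (unfold z; nra).
    destruct (Rlt_dec 0 z) as [_|]; [|lra].
    pose proof (tangent (g a) z (x a) Hg Hz H).
    pose proof (tangent (g a) z (g a) Hg Hz ltac:(lra)).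
    destruct (Rlt_dec 0 (g a)) as [_|]; [|lra].
    replace (g a / g a) with 1 in H2 by (field; lra). rewrite ln_1 in H2.
    assert (lam * (z * ln (z / g a) + (1 + ln (z / g a)) * (x a - z)) <=
            lam * (if Rlt_dec 0 (x a) then x a * ln (x a / g a) else 0)) by (apply Rmult_le_compat_l; lra).
    assert ((1 - lam) * (z * ln (z / g a) + (1 + ln (z / g a)) * (g a - z)) <= (1-lam) * (g a * 0))
      by (apply Rmult_le_compat_l; lra).
    assert (z * ln (z / g a) = lam * (z * ln (z / g a) + (1 + ln (z / g a)) * (x a - z)) +
      (1 - lam) * (z * ln (z / g a) + (1 + ln (z / g a)) * (g a - z))) by (unfold z; ring).
    lra.
Qed.

Lemma KL_self m g : KLsum m g g = 0.
Proof.
  unfold KLsum. rewrite sumA_lsum. rewrite (lsum_ext _ _ (fun _ => 0)).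
  - clear. induction (seq 0 m); auto. rewrite lsum_cons, IHl. ring.
  - intros a _. destruct (Rlt_dec 0 (g a)); auto. replace (g a / g a) with 1 by (field; lra).
    rewrite ln_1. ring.
Qed.

Lemma mix_pmf m x g lam : is_pmf m x -> is_pmf m g -> 0 <= lam <= 1 -> is_pmf m (mix lam x g).
Proof.
  intros [Hx0 Hx1] [Hg0 Hg1] Hl. split.
  - intros a Ha. unfold mix. pose proof (Hx0 a Ha). pose proof (Hg0 a Ha). nra.
  - unfold mix. rewrite sumA_lsum in *. rewrite lsum_plus, !lsum_scal, Hx1, Hg1. ring.
Qed.

Lemma qstar_le m q L cS f0 fstar : is_pmf m f0 -> lipschitz_l1 m q L -> 0 < L ->
  I_projection m q cS f0 fstar -> q fstar <= q f0 + Rmax (cS - q f0) 0.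
Proof.
  intros Hf0 Hlip HL [Hps [Hqs [Hacs Hmin]]].
  assert (Hac0 : abs_cont m f0 f0) by (intros a _ E; auto).
  unfold Rmax. destruct (Rle_dec (cS - q f0) 0) as [Hc|Hc].
  - assert (HK : KLsum m fstar f0 <= 0).
    { rewrite <- (KL_self m f0). apply Hmin; auto. lra. }
    pose proof (pinsker m fstar f0 Hps Hf0 Hacs). pose proof (l1_nonneg m fstar f0).
    assert (l1 m fstar f0 = 0) by nra.
    pose proof (Hlip fstar f0 Hps Hf0). rewrite H1, Rmult_0_r in H2.
    pose proof (Rle_abs (q fstar - q f0)). lra.
  - apply Rnot_le_lt in Hc. apply Rnot_lt_le. intros Hgt.
    pose proof (Hlip fstar f0 Hps Hf0). pose proof (Rle_abs (q fstar - q f0)).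
    pose proof (l1_nonneg m fstar f0).
    set (A := L * l1 m fstar f0). set (B := q fstar - cS).
    assert (HA : 0 < A) by (unfold A; lra).
    assert (Hl1 : 0 < l1 m fstar f0) by (unfold A in HA; nra).
    assert (HK : 0 < KLsum m fstar f0) by (pose proof (pinsker m fstar f0 Hps Hf0 Hacs); nra).
    assert (HB : 0 < B) by (unfold B; lra).
    set (eps := B / (A + B)).
    assert (He : 0 < eps < 1).
    { unfold eps. split. apply Rdiv_lt_0_compat; lra.
      apply (Rmult_lt_reg_r (A + B)); [lra|]. unfold Rdiv. rewrite Rmult_assoc, Rinv_l; lra. }
    assert (HeA : eps * A <= B).
    { unfold eps. replace (B / (A + B) * A) with (B * (A / (A + B))) by (field; lra).
      assert (A / (A + B) <= 1).
      { apply (Rmult_le_reg_r (A + B)); [lra|]. unfold Rdiv. rewrite Rmult_assoc, Rinv_l; lra. }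
      nra. }
    set (g := mix (1 - eps) fstar f0).
    assert (Hg : is_pmf m g) by (apply mix_pmf; auto; lra).
    assert (Hl1g : l1 m g fstar = eps * l1 m fstar f0).
    { unfold l1. rewrite !sumA_lsum, <- lsum_scal. apply lsum_ext. intros a _.
      unfold g, mix. replace ((1 - eps) * fstar a + (1 - (1 - eps)) * f0 a - fstar a) with
        (eps * (f0 a - fstar a)) by ring. rewrite Rabs_mult, Rabs_pos_eq by lra.
      rewrite Rabs_minus_sym. reflexivity. }
    pose proof (Hlip g fstar Hg Hps). rewrite Hl1g in H2.
    pose proof (Rle_abs (q fstar - q g)). rewrite Rabs_minus_sym in H2.
    assert (Hqg : cS <= q g).
    { assert (L * (eps * l1 m fstar f0) = eps * A) by (unfold A; ring). unfold B in HeA. lra. }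
    assert (Hacg : abs_cont m g f0).
    { intros a Ha E. unfold g, mix. rewrite E, (Hacs a Ha E). ring. }
    pose proof (Hmin g Hg Hqg Hacg).
    pose proof (KL_convex m fstar f0 (1 - eps) Hps Hf0 Hacs ltac:(lra)).
    fold g in H5. nra.
Qed.

Theorem theorem2 (m : nat) (f0 : nat -> R) (q : (nat -> R) -> R) (L qbar : R)
  (P1 : (nat -> R) -> Prop) (cS cD : R) (fstar : nat -> R) (n : nat) :
  (1 <= m)%nat ->
  is_pmf m f0 ->
  quasiconcave m q ->
  lipschitz_l1 m q L ->
  q f0 < 0 -> 0 < qbar ->
  (exists f, P1 f) ->
  (forall f, P1 f -> is_pmf m f /\ qbar <= q f) ->
  0 <= cD ->
  (exists f, is_pmf m f /\ cS < q f) ->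
  I_projection m q cS f0 fstar ->
  (1 <= n)%nat ->
  Rmax (cS - q f0) 0 + sqrt (2 * L ^ 2 * cD) < qbar - q f0 ->
  forall f1, P1 f1 ->
    prob_emp m n f1 (Gamma0 m q cS cD fstar) <=
    (INR n + 1) ^ m *
    exp (- INR n * ((qbar - q f0 - Rmax (cS - q f0) 0) / (sqrt 2 * L) - sqrt cD) ^ 2).
Proof.
  intros Hm Hf0 _ Hlip Hq0 Hqbar _ HP1 HcD _ Hproj Hn Hgap f1 Hf1.
  destruct (HP1 f1 Hf1) as [Hpf1 Hq1].
  assert (HL : 0 < L).
  { pose proof (Hlip f1 f0 Hpf1 Hf0). pose proof (Rle_abs (q f1 - q f0)).
    pose proof (l1_nonneg m f1 f0). nra. }
  assert (Hs2 : 0 < sqrt 2) by (apply sqrt_lt_R0; lra).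
  assert (Hs22 : sqrt 2 * sqrt 2 = 2) by (apply sqrt_sqrt; lra).
  assert (HscD : 0 <= sqrt cD) by apply sqrt_pos.
  assert (HscD2 : sqrt cD * sqrt cD = cD) by (apply sqrt_sqrt; lra).
  assert (Hsq : sqrt (2 * L ^ 2 * cD) = sqrt 2 * L * sqrt cD).
  { rewrite !sqrt_mult by (try apply pow2_ge_0; try lra; nra). rewrite sqrt_pow2 by lra. ring. }
  rewrite Hsq in Hgap.
  set (M := Rmax (cS - q f0) 0) in *.
  set (d := (qbar - q f0 - M) / (sqrt 2 * L) - sqrt cD).
  assert (Hd : sqrt 2 * L * d = qbar - q f0 - M - sqrt 2 * L * sqrt cD) by (unfold d; field; lra).
  assert (Hd0 : 0 < d).
  { assert (0 < sqrt 2 * L) by nra. nra. }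
  pose proof (qstar_le m q L cS f0 fstar Hf0 Hlip HL Hproj) as Hqs. fold M in Hqs.
  destruct Hproj as [Hps [HcS _]].
  assert (HKL : forall h, is_pmf m h -> abs_cont m h f1 -> Gamma0 m q cS cD fstar h ->
            d ^ 2 <= KLsum m h f1).
  { intros h Hh Hac HG.
    assert (Hqh : q h <= q f0 + M + sqrt 2 * L * sqrt cD).
    { destruct (Rle_dec cS (q h)) as [Hc|Hc].
      - destruct (classic (abs_cont m h fstar)) as [Ha|Ha].
        + destruct (Rle_dec cD (KLsum m h fstar)) as [Hk|Hk].
          { exfalso. apply HG. split; auto. right; auto. }
          apply Rnot_le_lt in Hk.
          pose proof (pinsker m h fstar Hh Hps Ha). pose proof (l1_nonneg m h fstar).
          assert (Hl : l1 m h fstar <= sqrt 2 * sqrt cD).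
          { apply Rnot_lt_le. intros Hlt. assert (0 <= sqrt 2 * sqrt cD) by nra.
            assert ((sqrt 2 * sqrt cD) * (sqrt 2 * sqrt cD) < l1 m h fstar * l1 m h fstar).
            { apply Rmult_le_0_lt_compat; lra. }
            replace ((sqrt 2 * sqrt cD) * (sqrt 2 * sqrt cD)) with ((sqrt 2 * sqrt 2) * (sqrt cD * sqrt cD)) in H2 by ring.
            rewrite Hs22, HscD2 in H2. simpl in H. lra. }
          pose proof (Hlip h fstar Hh Hps). pose proof (Rle_abs (q h - q fstar)).
          assert (L * l1 m h fstar <= L * (sqrt 2 * sqrt cD)) by (apply Rmult_le_compat_l; lra).
          lra.
        + exfalso. apply HG. split; auto. left; auto.
      - assert (0 <= sqrt 2 * L * sqrt cD) by (apply Rmult_le_pos; nra).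
        assert (cS - q f0 <= M) by apply Rmax_l. lra. }
    pose proof (Hlip f1 h Hpf1 Hh). pose proof (Rle_abs (q f1 - q h)).
    rewrite <- (Rabs_minus_sym) in H. unfold l1 in H.
    assert (Hl1 : sqrt 2 * L * d <= L * l1 m h f1).
    { unfold l1. rewrite Rabs_minus_sym in H0.
      assert (l1 m f1 h = l1 m h f1).
      { unfold l1. rewrite !sumA_lsum. apply lsum_ext. intros; apply Rabs_minus_sym. }
      unfold l1 in H1. rewrite H1 in H. lra. }
    assert (Hl2 : sqrt 2 * d <= l1 m h f1).
    { apply (Rmult_le_reg_l L); auto. lra. }
    pose proof (pinsker m h f1 Hh Hpf1 Hac).
    assert ((sqrt 2 * d) * (sqrt 2 * d) <= l1 m h f1 * l1 m h f1).
    { apply Rmult_le_compat; nra. }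
    replace ((sqrt 2 * d) * (sqrt 2 * d)) with ((sqrt 2 * sqrt 2) * (d * d)) in H2 by ring.
    rewrite Hs22 in H2. simpl in *. lra. }
  unfold prob_emp. change (fold_right Rplus 0 (map (fun w => word_prob f1 w * Pilot.Defs.ind (Gamma0 m q cS cD fstar (emp w))) (words m n)))
    with (lsum (words m n) (fun w => word_prob f1 w * Pilot.Defs.ind (Gamma0 m q cS cD fstar (emp w)))).
  apply Rle_trans with (lsum (words m n) (fun w => exp (- INR n * d ^ 2) * word_prob (emp w) w)).
  - apply lsum_le. intros w Hw.
    assert (Hwp : 0 <= word_prob (emp w) w).
    { apply wp_nonneg. intros x Hx. apply words_in in Hw. destruct Hw as [Hl Hx'].
      destruct (emp_pmf m n w Hn) as [He _]. apply words_in; auto. apply He; auto. }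
    assert (0 < exp (- INR n * d ^ 2)) by apply exp_pos.
    unfold Pilot.Defs.ind. destruct (excluded_middle_informative _) as [HG|HG].
    + rewrite Rmult_1_r. destruct (classic (abs_cont m (emp w) f1)) as [Ha|Ha].
      * rewrite (type_prob m n f1 w Hn Hw) by (auto; intros; apply Hpf1; auto).
        pose proof (HKL (emp w) (emp_pmf m n w Hn Hw) Ha HG).
        assert (exp (- INR n * KLsum m (emp w) f1) <= exp (- INR n * d ^ 2)).
        { assert (0 <= INR n) by apply pos_INR.
          assert (- INR n * KLsum m (emp w) f1 <= - INR n * d ^ 2) by nra.
          destruct H2 as [H2|H2]; [left; apply exp_increasing; auto|right; rewrite H2; auto]. }
        rewrite (Rmult_comm (exp (- INR n * d ^ 2))). apply Rmult_le_compat_l; auto.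
      * rewrite (type_prob0 m n f1 w Hn Hw Ha). nra.
    + nra.
  - rewrite lsum_scal. rewrite Rmult_comm. apply Rmult_le_compat_r.
    + left; apply exp_pos.
    + apply types_bound; auto.
Qed.
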